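(* Let $\kappa$ be a regular uncountable cardinal and $I$ an ideal on $\kappa$. Then $I$ is pleasant if and only if $I$ is densely pleasant, i.e. for every $A\in I^+$ there is $B\in (I\restriction A)^+$ such that $I\restriction B$ is pleasant.
   Context: An ideal on $\kappa$ is a family of subsets of $\kappa$ closed under subsets and finite unions, which is $<\kappa$-complete and contains all singletons. $I^+=\{X\subseteq\kappa: X\notin I\}$, and for $A\in I^+$, $I\restriction A=\{X\subseteq\kappa: X\cap A\in I\}$. For $A\subseteq\kappa$ and $X_\alpha\subseteq\kappa$, $\bigtriangledown_{\alpha\in A}X_\alpha=\{\xi<\kappa:\exists\alpha<\xi\,(\alpha\in A\wedge \xi\in X_\alpha)\}$. $I$ is pleasant if whenever $A\in I$ and $X_\alpha\in I$ for all $\alpha$, then $\bigtriangledown_{\alpha\in A}X_\alpha\in I$. *)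

(* Defs.v *)
(* ordinals/cardinals modelled abstractly.
   kappa is represented by a type K with a strict well-order lt;
   subsets of kappa are predicates K -> Prop; a family of subsets
   (e.g. an ideal) is a predicate (K -> Prop) -> Prop. *)
From Stdlib Require Import Relations Wellfounded.

Set Implicit Arguments.

Section Card.
Variables (K : Type) (lt : K -> K -> Prop).

(* |J| < kappa  (with kappa = |K|): there is no injection K -> J *)
Definition card_lt_kappa (J : Type) : Prop :=
  ~ exists f : K -> J, forall x y, f x = f y -> x = y.

Definition strict_well_order : Prop :=
  well_founded lt /\
  (forall x, ~ lt x x) /\
  (forall x y z, lt x y -> lt y z -> lt x z) /\
  (forall x y, lt x y \/ x = y \/ lt y x).

Definition is_cardinal : Prop :=
  forall a : K, card_lt_kappa {b : K | lt b a}.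

Definition is_regular : Prop :=
  forall X : K -> Prop, card_lt_kappa {x : K | X x} ->
    exists b : K, forall x, X x -> lt x b.

Definition is_uncountable : Prop :=
  ~ exists f : K -> nat, forall x y, f x = f y -> x = y.

Definition regular_uncountable_cardinal : Prop :=
  strict_well_order /\ is_cardinal /\ is_regular /\ is_uncountable.

Definition is_ideal (I : (K -> Prop) -> Prop) : Prop :=
  (forall X Y : K -> Prop, I X -> (forall x, Y x -> X x) -> I Y) /\
  (forall X Y : K -> Prop, I X -> I Y -> I (fun x => X x \/ Y x)) /\
  (forall (J : Type) (F : J -> K -> Prop), card_lt_kappa J ->
     (forall j, I (F j)) -> I (fun x => exists j, F j x)) /\
  (forall a : K, I (fun x => x = a)).

Definition positive (I : (K -> Prop) -> Prop) (X : K -> Prop) : Prop := ~ I X.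

Definition restrict (I : (K -> Prop) -> Prop) (A : K -> Prop) : (K -> Prop) -> Prop :=
  fun X => I (fun x => X x /\ A x).

Definition diag_union (A : K -> Prop) (X : K -> K -> Prop) : K -> Prop :=
  fun xi => exists a, lt a xi /\ A a /\ X a xi.

Definition pleasant (I : (K -> Prop) -> Prop) : Prop :=
  forall (A : K -> Prop) (X : K -> K -> Prop),
    I A -> (forall a, I (X a)) -> I (diag_union A X).

Definition densely_pleasant (I : (K -> Prop) -> Prop) : Prop :=
  forall A : K -> Prop, positive I A ->
    exists B : K -> Prop, positive (restrict I A) B /\ pleasant (restrict I B).

End Card.

(* Main.v *)
Require Import Defs.
From Stdlib Require Import Classical.

Theorem proposition2p6 (K : Type) (lt : K -> K -> Prop)
  (I : (K -> Prop) -> Prop) :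
  regular_uncountable_cardinal lt ->
  is_ideal I ->
  (pleasant lt I <-> densely_pleasant lt I).
Proof.
  intros _ [Hsub _]. split.
  - intros Hp A HA. exists (fun _ => True). split.
    + unfold positive, restrict. intro H. apply HA.
      apply (Hsub _ _ H). intros x Hx; tauto.
    + unfold pleasant, restrict. intros C X HC HX.
      apply (Hsub _ _ (Hp C X (Hsub _ _ HC (fun x Hx => conj Hx Logic.I))
        (fun a => Hsub _ _ (HX a) (fun x Hx => conj Hx Logic.I)))).
      intros x [Hx _]; exact Hx.
  - intros Hd A X HA HX. apply NNPP. intro HD.
    destruct (Hd _ HD) as [B [HB HpB]].
    apply HB. unfold restrict.
    apply (Hsub _ _ (HpB A X (Hsub _ _ HA (fun x Hx => proj1 Hx))
      (fun a => Hsub _ _ (HX a) (fun x Hx => proj1 Hx)))).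
    intros x [Hx1 Hx2]; split; assumption.
Qed.
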